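(* Let $S,T,V$ be ordered trees and let $i\colon S\to T$ and $j\colon T\to V$ be embeddings. Let $x$ be a leaf of $S$, $y$ a leaf of $T$ and $z$ a leaf of $V$. If $y$ is $i$-conjugate to $x$ and $z$ is $j$-conjugate to $y$, then $z$ is $(j\circ i)$-conjugate to $x$.
   Context: A tree is a finite, non-empty poset $(T,\sqsubseteq_T)$ with a smallest element (root) in which the predecessors of each element form a chain (each element is its own predecessor); $v\wedge_T w$ is the largest common predecessor. An ordered tree has a fixed linear order on the immediate successors of each node, inducing the lexicographic linear order $\leq_T$: $v\leq_T w$ if $v\sqsubseteq_T w$, and for incomparable $v,w$, $v\leq_T w$ iff the immediate successor of $v\wedge_T w$ below $v$ precedes the one below $w$. A morphism preserves $\wedge$, is $\leq$-monotone and maps root to root; an embedding is an injective morphism. A leaf is a $\sqsubseteq$-maximal node. For an embedding $i\colon S\to T$, a leaf $y$ of $T$ is $i$-conjugate to a leaf $x$ of $S$ if: (i) when $x$ is the $\leq_S$-largest leaf of $S$, $y$ is the $\leq_T$-largest leaf of $T$; (ii) otherwise, letting $x'$ be the $\leq_S$-smallest leaf of $S$ with $x<_S x'$, $y$ is the $\leq_T$-largest leaf of $T$ such that $y<_T i(x')$ and $i(x)\wedge_T i(x')=y\wedge_T i(x')$. *)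

(* Defs.v *)
From mathcomp Require Import all_boot.
Set Implicit Arguments. Unset Strict Implicit. Unset Printing Implicit Defensive.

Section Generic.
Variable T : finType.

Definition isucc (le : rel T) (u v : T) : bool :=
  [&& le u v, u != v & [forall w, (le u w && le w v) ==> (w == u) || (w == v)]].

(* largest common predecessor of v and w (exists in a finite tree; root is a default) *)
Definition gmeet (le : rel T) (root : T) (v w : T) : T :=
  odflt root [pick m | [&& le m v, le m w &
                         [forall c, (le c v && le c w) ==> le c m]]].

(* lexicographic order induced by the sibling orders sib *)
Definition glex (le : rel T) (root : T) (sib : rel T) (v w : T) : bool :=
  le v w ||
  (~~ le w v &&
   [exists c, [exists c',
      [&& isucc le (gmeet le root v w) c, isucc le (gmeet le root v w) c',
          le c v, le c' w & sib c c']]]).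
End Generic.

Record otree := OTree {
  ot_sort :> finType;
  ot_le : rel ot_sort;
  ot_root : ot_sort;
  ot_sib : rel ot_sort;
  ot_le_refl : reflexive ot_le;
  ot_le_anti : antisymmetric ot_le;
  ot_le_trans : transitive ot_le;
  ot_root_min : forall v, ot_le ot_root v;
  ot_pred_chain : forall v a b, ot_le a v -> ot_le b v -> ot_le a b || ot_le b a;
  ot_sib_refl : forall u a, isucc ot_le u a -> ot_sib a a;
  ot_sib_anti : forall u a b, isucc ot_le u a -> isucc ot_le u b ->
      ot_sib a b -> ot_sib b a -> a = b;
  ot_sib_trans : forall u a b c, isucc ot_le u a -> isucc ot_le u b -> isucc ot_le u c ->
      ot_sib a b -> ot_sib b c -> ot_sib a c;
  ot_sib_total : forall u a b, isucc ot_le u a -> isucc ot_le u b ->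
      ot_sib a b || ot_sib b a
}.

Section OTreeDefs.
Variable S : otree.

Definition tle (v w : S) : bool := @ot_le S v w.
Definition tmeet (v w : S) : S := gmeet (@ot_le S) (@ot_root S) v w.
Definition tlex (v w : S) : bool := glex (@ot_le S) (@ot_root S) (@ot_sib S) v w.
Definition tltx (v w : S) : bool := tlex v w && (v != w).

Definition leaf (v : S) : Prop := forall w, tle v w -> w = v.

Definition greatest_leaf (P : S -> Prop) (y : S) : Prop :=
  [/\ leaf y, P y & forall y', leaf y' -> P y' -> tlex y' y].
Definition least_leaf (P : S -> Prop) (y : S) : Prop :=
  [/\ leaf y, P y & forall y', leaf y' -> P y' -> tlex y y'].
End OTreeDefs.

Definition morphism (S T : otree) (f : S -> T) : Prop :=
  [/\ forall v w : S, f (tmeet v w) = tmeet (f v) (f w),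
      forall v w : S, tlex v w -> tlex (f v) (f w)
    & f (ot_root S) = ot_root T].

Definition embedding (S T : otree) (f : S -> T) : Prop :=
  morphism f /\ injective f.

Definition conjugate (S T : otree) (i : S -> T) (x : S) (y : T) : Prop :=
  (greatest_leaf (fun _ => True) x -> greatest_leaf (fun _ => True) y) /\
  (~ greatest_leaf (fun _ => True) x ->
     exists x' : S, least_leaf (fun x' => tltx x x') x' /\
       greatest_leaf (fun y' => tltx y' (i x') /\
                                tmeet (i x) (i x') = tmeet y' (i x')) y).

(* Main.v *)
Require Import Defs.
From mathcomp Require Import all_boot.
Set Implicit Arguments. Unset Strict Implicit. Unset Printing Implicit Defensive.

Section Tree.
Variable S : otree.
Implicit Types u v w c d e f l m p q r M D : S.

Lemma tle_refl v : tle v v. Proof. exact: ot_le_refl. Qed.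
Lemma tle_anti u v : tle u v -> tle v u -> u = v.
Proof. by move=> h1 h2; apply: (@ot_le_anti S); rewrite /tle in h1 h2; rewrite h1 h2. Qed.
Lemma tle_trans u v w : tle u v -> tle v w -> tle u w.
Proof. exact: (@ot_le_trans S v u w). Qed.
Lemma chain a b v : tle a v -> tle b v -> tle a b || tle b a.
Proof. exact: ot_pred_chain. Qed.

Lemma npreds_lt a b : tle a b -> a != b ->
  #|[pred t : S | tle t a]| < #|[pred t : S | tle t b]|.
Proof.
move=> hab ne; apply: proper_card; apply/properP; split.
  by apply/subsetP => t; rewrite !inE => h; exact: tle_trans h hab.
exists b; rewrite !inE ?tle_refl //; apply/negP => hba.
by move/eqP: ne; apply; apply: tle_anti.
Qed.

Lemma meet_ex v w : exists m, [&& tle m v, tle m w &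
   [forall c, (tle c v && tle c w) ==> tle c m]].
Proof.
pose P := fun u : S => tle u v && tle u w.
have P0 : P (ot_root S) by rewrite /P /tle !ot_root_min.
case: (arg_maxnP (fun u : S => #|[pred t : S | tle t u]|) P0) => m /andP[mv mw] mmax.
exists m; rewrite mv mw /=; apply/forallP => c; apply/implyP => /andP[cv cw].
case/orP: (chain mv cv) => [mc|//].
case: (eqVneq m c) => [->|ne]; first exact: tle_refl.
have := npreds_lt mc ne; have := mmax c; rewrite /P cv cw => /(_ isT).
by move=> h1 h2; move: (leq_trans h2 h1); rewrite ltnn.
Qed.

Lemma tmeetP v w : [/\ tle (tmeet v w) v, tle (tmeet v w) w &
  forall c, tle c v -> tle c w -> tle c (tmeet v w)].
Proof.
rewrite /tmeet /gmeet; case: pickP => [m /and3P[h1 h2 /forallP h3]| H].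
  by split=> // c cv cw; move: (h3 c); rewrite /tle in cv cw *; rewrite cv cw.
by case: (meet_ex v w) => m; rewrite H.
Qed.

Lemma meet_l v w : tle (tmeet v w) v. Proof. by case: (tmeetP v w). Qed.
Lemma meet_r v w : tle (tmeet v w) w. Proof. by case: (tmeetP v w). Qed.
Lemma meet_glb v w c : tle c v -> tle c w -> tle c (tmeet v w).
Proof. by case: (tmeetP v w) => _ _; apply. Qed.

Lemma meet_uniq v w m : tle m v -> tle m w ->
  (forall c, tle c v -> tle c w -> tle c m) -> tmeet v w = m.
Proof.
move=> h1 h2 h3; apply: tle_anti; first by apply: h3; [apply: meet_l|apply: meet_r].
exact: meet_glb.
Qed.

Lemma tmeetC v w : tmeet v w = tmeet w v.
Proof. apply: meet_uniq; [exact: meet_r|exact: meet_l|by move=> c h1 h2; apply: meet_glb]. Qed.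

Lemma tle_meet v w : tle v w -> tmeet v w = v.
Proof. by move=> h; apply: meet_uniq => //; exact: tle_refl. Qed.

Lemma meet_tle v w : tmeet v w = v -> tle v w.
Proof. by move=> <-; exact: meet_r. Qed.

Lemma isucc_below u c p : isucc (@ot_le S) u c -> tle p c -> p != c -> tle p u.
Proof.
case/and3P=> uc _ /forallP h pc ne.
case/orP: (chain pc uc) => [//|up].
move: (h p); rewrite /tle in up pc; rewrite up pc /= => /orP[/eqP->|/eqP e].
  exact: tle_refl.
by rewrite e eqxx in ne.
Qed.

Lemma isucc_not_below u c : isucc (@ot_le S) u c -> tle c u -> False.
Proof.
move=> h cu; case/and3P: (h) => uc ne _.
by move/eqP: ne; apply; apply: tle_anti.
Qed.

Lemma isucc_uniq u c1 c2 v : isucc (@ot_le S) u c1 -> isucc (@ot_le S) u c2 ->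
  tle c1 v -> tle c2 v -> c1 = c2.
Proof.
move=> h1 h2 c1v c2v.
case: (eqVneq c1 c2) => // ne.
case/orP: (chain c1v c2v) => h.
  by case: (isucc_not_below h1 (isucc_below h2 h ne)).
by rewrite eq_sym in ne; case: (isucc_not_below h2 (isucc_below h1 h ne)).
Qed.

Lemma dir_ex m v : tle m v -> m != v ->
  exists2 c, isucc (@ot_le S) m c & tle c v.
Proof.
move=> mv ne.
pose P := fun c : S => [&& tle m c, c != m & tle c v].
have P0 : P v by rewrite /P mv tle_refl eq_sym ne.
case: (arg_minnP (fun u : S => #|[pred t : S | tle t u]|) P0) => c /and3P[mc cm cv] cmin.
exists c => //; apply/and3P; split => //; first by rewrite eq_sym.
apply/forallP => w; apply/implyP => /andP[mw wc].
have {mw} mw : tle m w := mw. have {wc} wc : tle w c := wc.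
case: (eqVneq w m) => //= wm; case: (eqVneq w c) => //= wcn.
have := npreds_lt wc wcn; have := cmin w.
rewrite /P mw wm (tle_trans wc cv) => /(_ isT) h1 h2.
by move: (leq_trans h2 h1); rewrite ltnn.
Qed.

Lemma leaf_ex v : exists2 l, leaf l & tle v l.
Proof.
pose P := fun u : S => tle v u.
have P0 : P v by exact: tle_refl.
case: (arg_maxnP (fun u : S => #|[pred t : S | tle t u]|) P0) => l vl lmax.
exists l => // w lw; case: (eqVneq w l) => // ne.
rewrite eq_sym in ne.
have := npreds_lt lw ne; have := lmax w (tle_trans vl lw).
by move=> h1 h2; move: (leq_trans h2 h1); rewrite ltnn.
Qed.

Lemma tlexE v w : tlex v w = tle v w || (~~ tle w v &&
  [exists c, [exists c', [&& isucc (@ot_le S) (tmeet v w) c,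
      isucc (@ot_le S) (tmeet v w) c', tle c v, tle c' w & ot_sib c c']]]).
Proof. by []. Qed.

Lemma tlex_inc v w e f : ~~ tle v w -> ~~ tle w v ->
  isucc (@ot_le S) (tmeet v w) e -> tle e v ->
  isucc (@ot_le S) (tmeet v w) f -> tle f w -> tlex v w = ot_sib e f.
Proof.
move=> nvw nwv he ev hf fw; rewrite tlexE (negbTE nvw) nwv /=.
apply/existsP/idP.
  case=> c /existsP[c' /and5P[hc hc' cv c'w s]].
  by rewrite (isucc_uniq he hc ev cv) (isucc_uniq hf hc' fw c'w).
move=> s; exists e; apply/existsP; exists f; by rewrite he hf ev fw s.
Qed.

Lemma dir_ne m e f v w : tmeet v w = m -> isucc (@ot_le S) m e ->
  isucc (@ot_le S) m f -> tle e v -> tle f w -> e != f.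
Proof.
move=> hm he hf ev fw; apply/eqP => ef; subst f.
apply: (isucc_not_below he); rewrite -hm; exact: meet_glb.
Qed.

Lemma leaf_inc (l1 l2 : S) : leaf l1 -> l1 != l2 -> ~~ tle l1 l2.
Proof. by move=> h ne; apply/negP => /h e; rewrite e eqxx in ne. Qed.

Lemma meet_via u c r l : isucc (@ot_le S) u c -> tle c l -> tle u r -> tle u l ->
  ~~ tle c r -> tmeet r l = u.
Proof.
move=> hu cl ur ul ncr; apply: meet_uniq => // q qr ql.
case/orP: (chain ql cl) => h.
  case: (eqVneq q c) => [e|ne]; first by move: ncr; rewrite -e qr.
  exact: isucc_below hu h ne.
by rewrite (tle_trans h qr) in ncr.
Qed.

Lemma transfer M D (b1 b2 : S) l : tle M D -> M != D -> tle D b1 -> tle D b2 ->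
  leaf l -> tltx l b1 -> tmeet l b1 = M -> tltx l b2 /\ tmeet l b2 = M.
Proof.
move=> MD MnD Db1 Db2 ll /andP[lb1 lnb1] m1.
have [d hd dD] := dir_ex MD MnD.
have db1 := tle_trans dD Db1; have db2 := tle_trans dD Db2.
have ndl : ~~ tle d l.
  apply/negP => dl; apply: (isucc_not_below hd); rewrite -m1; exact: meet_glb.
have Ml : tle M l by rewrite -m1; exact: meet_l.
have Mb2 : tle M b2 := tle_trans MD Db2.
have m2 : tmeet l b2 = M := meet_via hd db2 Ml Mb2 ndl.
have inc1 : forall b, tle d b -> tmeet l b = M -> ~~ tle l b /\ ~~ tle b l.
  move=> b db mb; split; apply/negP => h.
    have lM : l = M by rewrite -mb; rewrite tle_meet.
    case/and3P: (hd) => Md _ _.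
    have ld : tle l d by rewrite lM.
    by move: ndl; rewrite (ll d ld) tle_refl.
  by rewrite (tle_trans db h) in ndl.
have MnL : M != l.
  apply/eqP => e; case/and3P: (hd) => Md _ _.
  have ld : tle l d by rewrite -e.
  by move: ndl; rewrite (ll d ld) tle_refl.
have [e he el] := dir_ex Ml MnL.
case: (inc1 _ db1 m1) => n1 n1'; case: (inc1 _ db2 m2) => n2 n2'.
split=> //; apply/andP; split.
  rewrite (tlex_inc n2 n2' (e:=e) (f:=d)) ?m2 //.
  by rewrite -(tlex_inc n1 n1' (e:=e) (f:=d)) ?m1.
by apply/eqP => e2; rewrite e2 tle_refl in n2.
Qed.
End Tree.

Lemma morph_tle (S T : otree) (f : S -> T) v w : morphism f -> tle v w -> tle (f v) (f w).
Proof. by case=> hm _ _ h; apply: meet_tle; rewrite -hm tle_meet. Qed.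

Theorem lemma4p13 (S T V : otree) (i : S -> T) (j : T -> V)
  (x : S) (y : T) (z : V) :
  embedding i -> embedding j ->
  leaf x -> leaf y -> leaf z ->
  conjugate i x y -> conjugate j y z ->
  conjugate (j \o i) x z.
Proof.
move=> [hmi inj_i] [hmj inj_j] lx ly lz [cy1 cy2] [cz1 cz2].
case: (hmi) => mi_meet _ _; case: (hmj) => mj_meet _ _.
split; first by move=> gx; exact: cz1 (cy1 gx).
move=> ngx; have [x' [[lx' xx' lst] [ly_ Py gy]]] := cy2 ngx.
exists x'; split; first by split.
set a := i x' in lst gy Py *. set m0 := tmeet (i x) a.
have hx'x : ~~ tle x' x.
  apply/negP => h; move: xx' => /andP[]; rewrite tlexE h /= orbF => hxx' ne.
  by rewrite (tle_anti h hxx') eqxx in ne.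
have hm0a : tle m0 a by exact: meet_r.
have hm0ne : m0 != a.
  apply/eqP; rewrite /m0 /a -mi_meet => /inj_i e.
  by move: hx'x; rewrite -e meet_l.
have [c hc ca] := dir_ex hm0a hm0ne.
case: Py => /andP[ya yna] hmy; rewrite -/m0 in hmy; move/esym: hmy => hmy.
have nya : ~~ tle y a by apply/negP => /ly e; move: yna; rewrite e eqxx.
have nay : ~~ tle a y.
  apply/negP => h; have : tle a m0 by rewrite -hmy; apply: meet_glb => //; exact: tle_refl.
  by move=> h2; move/eqP: hm0ne; apply; apply: tle_anti.
have hm0y : tle m0 y by rewrite -hmy; exact: meet_l.
have hm0ney : m0 != y by apply/eqP => e; move: nya; rewrite -e hm0a.
have [cy hcy cyy] := dir_ex hm0y hm0ney.
have sib1 : ot_sib cy c.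
  by rewrite -(tlex_inc nya nay (e:=cy) (f:=c)) ?hmy.
have ncy : ~~ tle c y.
  apply/negP => h; apply: (isucc_not_below hc); rewrite -hmy; exact: meet_glb.
have cyc : cy != c by apply/eqP => e; move: ncy; rewrite -e cyy.
have [La lLa aLa] := leaf_ex a.
have cLa := tle_trans ca aLa.
have m0La := tle_trans hm0a aLa.
have hyLa : tmeet y La = m0 := meet_via hc cLa hm0y m0La ncy.
have yLa : y != La by apply/eqP => e; move: ncy; rewrite e cLa.
have n1 := leaf_inc ly yLa.
have n2 := leaf_inc lLa (contra_neq esym yLa).
have tyLa : tltx y La.
  by rewrite /tltx yLa andbT (tlex_inc n1 n2 (e:=cy) (f:=c)) ?hyLa.
have ngy : ~ greatest_leaf (fun _ => True) y.
  case=> _ _ h; have := h La lLa I.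
  rewrite (tlex_inc n2 n1 (e:=c) (f:=cy)) ?(tmeetC La) ?hyLa // => s2.
  by move: cyc; rewrite (ot_sib_anti hcy hc sib1 s2) eqxx.
have [y' [[ly' yy' lsty'] [lz' Qz gz]]] := cz2 ngy.
have y'La : tlex y' La := lsty' La lLa tyLa.
have G : forall l e, leaf l -> tle m0 l -> isucc (@ot_le T) m0 e -> tle e l ->
    ot_sib e c -> e != c -> tlex l y.
  move=> l e ll m0l he el se ec.
  have ncl : ~~ tle c l.
    by apply/negP => h; move: ec; rewrite (isucc_uniq he hc el h) eqxx.
  have hla : tmeet l a = m0 := meet_via hc ca m0l hm0a ncl.
  have nla : ~~ tle l a by apply/negP => /ll e2; move: ncl; rewrite -e2 ca.
  have nal : ~~ tle a l by apply/negP => h; move: ncl; rewrite (tle_trans ca h).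
  apply: gy => //; split; last by rewrite hla.
  rewrite /tltx (tlex_inc nla nal (e:=e) (f:=c)) ?hla // se /=.
  by apply/eqP => e2; move: nla; rewrite e2 tle_refl.
have cy' : tle c y'.
  case: (boolP (tle c y')) => // ncy'; exfalso.
  case/andP: yy' => yy'1 yy'2.
  have nyy1 := leaf_inc ly yy'2.
  have nyy2 := leaf_inc ly' (contra_neq esym yy'2).
  set q := tmeet y y'.
  have qy : tle q y := meet_l _ _.
  have qy' : tle q y' := meet_r _ _.
  have qny : q != y by apply/eqP => e; move: nyy1; rewrite -e qy'.
  have qny' : q != y' by apply/eqP => e; move: nyy2; rewrite -e qy.
  have [eq heq eqy] := dir_ex qy qny.
  have [eq' heq' eqy'] := dir_ex qy' qny'.
  have sib2 : ot_sib eq eq' by rewrite -(tlex_inc nyy1 nyy2 (e:=eq) (f:=eq')).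
  have eqne : eq != eq' := dir_ne (erefl q) heq heq' eqy eqy'.
  have nyy : ~~ tlex y' y.
    rewrite (tlex_inc nyy2 nyy1 (e:=eq') (f:=eq)) ?(tmeetC y') //.
    apply/negP => s2; move: eqne; by rewrite (ot_sib_anti heq heq' sib2 s2) eqxx.
  have y'nLa : y' != La by apply/eqP => e; move: ncy'; rewrite e cLa.
  have n3 := leaf_inc ly' y'nLa.
  have n4 := leaf_inc lLa (contra_neq esym y'nLa).
  case: (eqVneq q m0) => qm0.
    have m0y' : tle m0 y' by rewrite -qm0.
    have heq'' : isucc (@ot_le T) m0 eq' by rewrite -qm0.
    have eq'c : eq' != c by apply/eqP => e; move: ncy'; rewrite -e eqy'.
    case/orP: (ot_sib_total heq'' hc) => s3.
      by move: nyy; rewrite (G y' eq' ly' m0y' heq'' eqy' s3 eq'c).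
    have hy'La : tmeet y' La = m0 := meet_via hc cLa m0y' m0La ncy'.
    move: y'La; rewrite (tlex_inc n3 n4 (e:=eq') (f:=c)) ?hy'La // => s4.
    by move: eq'c; rewrite (ot_sib_anti heq'' hc s4 s3) eqxx.
  case/orP: (chain qy hm0y) => hq.
    have [g hg gm0] := dir_ex hq qm0.
    have geq : g = eq := isucc_uniq hg heq (tle_trans gm0 hm0y) eqy.
    have gLa := tle_trans gm0 m0La.
    have ngy' : ~~ tle g y'.
      apply/negP => h; apply: (isucc_not_below hg); apply: meet_glb => //.
      exact: tle_trans gm0 hm0y.
    have hy'La : tmeet y' La = q := meet_via hg gLa qy' (tle_trans hq m0La) ngy'.
    move: y'La; rewrite (tlex_inc n3 n4 (e:=eq') (f:=g)) ?hy'La // geq => s4.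
    by move: eqne; rewrite (ot_sib_anti heq heq' sib2 s4) eqxx.
  have qm0' : m0 != q by rewrite eq_sym.
  have [d hd dq] := dir_ex hq qm0'.
  have dcy : d = cy := isucc_uniq hd hcy (tle_trans dq qy) cyy.
  have dy' := tle_trans dq qy'.
  have m0y' := tle_trans hq qy'.
  have dc : d != c by rewrite dcy.
  have sd : ot_sib d c by rewrite dcy.
  by move: nyy; rewrite (G y' d ly' m0y' hd dy' sd dc).
have m0c : tle m0 c by case/and3P: hc.
have hyy' : tmeet y y' = m0 := meet_via hc cy' hm0y (tle_trans m0c cy') ncy.
have M1 : tmeet (j y) (j y') = j m0 by rewrite -mj_meet hyy'.
have M2 : tmeet (j (i x)) (j a) = j m0 by rewrite -mj_meet.
have MD : tle (j m0) (j c) := morph_tle hmj m0c.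
have MnD : j m0 != j c by rewrite (inj_eq inj_j); case/and3P: hc.
have D1 := morph_tle hmj cy'.
have D2 := morph_tle hmj ca.
change (greatest_leaf (fun l => tltx l (j a) /\ tmeet (j (i x)) (j a) = tmeet l (j a)) z).
rewrite M2.
case: Qz => Qz1 Qz2; rewrite M1 in Qz2.
split => //.
  by have [h1 h2] := transfer MD MnD D1 D2 lz Qz1 (esym Qz2); split; rewrite ?h2.
move=> l ll [h1 h2]; apply: gz => //.
have [h3 h4] := transfer MD MnD D2 D1 ll h1 (esym h2).
by split => //; rewrite M1 h4.
Qed.
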